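(* Let $\mathcal{P}$ be a locally finite poset. Then $J\triangleright\zeta_3=\delta_3$; equivalently, for all $(x,y,z)\in\mathcal{F}l^3(\mathcal{P})$, $$\sum_{x\le a\le y\le b\le z}J(x,a,a)\,J(b,b,z)=\delta_3(x,y,z).$$
   Context: $\mathcal{F}l^3(\mathcal{P})=\{(x,y,z)\in\mathcal{P}^3:x\le y\le z\}$. For functions $f,g:\mathcal{F}l^3(\mathcal{P})\to\mathbb{Z}$, define $(f\triangleright g)(x,y,z)=\sum_{x\le a\le y\le b\le z}f(x,a,a)\,g(a,y,b)\,f(b,b,z)$ (sum over $a,b\in\mathcal{P}$). $\zeta_3$ is the constant function $1$ on $\mathcal{F}l^3(\mathcal{P})$, $\delta_3(x,y,z)=1$ if $x=y=z$ and $0$ otherwise, and $J:\mathcal{F}l^3(\mathcal{P})\to\mathbb{Z}$ is the unique function with $\zeta_3\triangleright J=\delta_3$, i.e. $\sum_{x\le a\le y\le b\le z}J(a,y,b)=\delta_3(x,y,z)$ for all $(x,y,z)$. *)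

(* Defs.v *)
From HB Require Import structures.
From mathcomp Require Import all_boot all_order all_algebra.
Set Implicit Arguments. Unset Strict Implicit. Unset Printing Implicit Defensive.
Import Order.TTheory GRing.Theory Num.Theory.
Local Open Scope order_scope.

(* A locally finite poset T is given by a porderType together with an
   enumeration [itv x y] of each closed interval [x, y] as a duplicate-free
   list.  Local finiteness of a poset is exactly the existence of such an
   enumeration. *)
Definition is_interval_enum (d : Order.disp_t) (T : porderType d)
  (itv : T -> T -> seq T) : Prop :=
  (forall x y, uniq (itv x y)) /\
  (forall x y a, (a \in itv x y) = (x <= a) && (a <= y)).

Definition delta3 (d : Order.disp_t) (T : porderType d) (x y z : T) : int :=
  ((x == y) && (y == z))%:R.

Definition tri (d : Order.disp_t) (T : porderType d) (itv : T -> T -> seq T)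
  (f g : T -> T -> T -> int) (x y z : T) : int :=
  (\sum_(a <- itv x y) \sum_(b <- itv y z) f x a a * g a y b * f b b z)%R.

Definition zeta3 (d : Order.disp_t) (T : porderType d) (x y z : T) : int := 1%R.

(* Main.v *)
Require Import Defs.
From HB Require Import structures.
From mathcomp Require Import all_boot all_order all_algebra.
Import Order.TTheory GRing.Theory Num.Theory.
Local Open Scope order_scope.

Theorem corollary5p3 (d : Order.disp_t) (T : porderType d)
  (itv : T -> T -> seq T) (Hitv : is_interval_enum itv)
  (J : T -> T -> T -> int)
  (HJ : forall x y z : T, x <= y -> y <= z ->
          tri itv (@zeta3 d T) J x y z = delta3 x y z) :
  (forall x y z : T, x <= y -> y <= z ->
     tri itv J (@zeta3 d T) x y z = delta3 x y z) /\
  (forall x y z : T, x <= y -> y <= z ->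
     (\sum_(a <- itv x y) \sum_(b <- itv y z) J x a a * J b b z)%R
       = delta3 x y z).
Proof.
case: Hitv => Hu Hm.
have L1 : forall y (G : T -> int), (\sum_(b <- itv y y) G b)%R = G y.
  move=> y G; rewrite (perm_big [:: y]) ?big_seq1 //.
  apply: uniq_perm => //= a; by rewrite Hm inE eq_le andbC.
have L2 : forall x b z (F : T -> int), x <= b ->
    (\sum_(a <- itv b z) F a)%R = (\sum_(a <- itv x z) (if (b <= a)%O then F a else 0))%R.
  move=> x b z F xb; rewrite -big_mkcond -big_filter; apply: perm_big.
  apply: uniq_perm; rewrite ?filter_uniq // => a.
  rewrite mem_filter !Hm; case ba: (b <= a) => //=.
  by rewrite (le_trans xb ba).
have L3 : forall x b z (F : T -> int), b <= z ->
    (\sum_(a <- itv x b) F a)%R = (\sum_(a <- itv x z) (if (a <= b)%O then F a else 0))%R.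
  move=> x b z F bz; rewrite -big_mkcond -big_filter; apply: perm_big.
  apply: uniq_perm; rewrite ?filter_uniq // => a.
  rewrite mem_filter !Hm; case ab: (a <= b); rewrite /= ?andbF //.
  by rewrite (le_trans ab bz).
have EX : forall x z (F : T -> T -> int),
    (\sum_(b <- itv x z) \sum_(a <- itv b z) F b a)%R =
    (\sum_(a <- itv x z) \sum_(b <- itv x a) F b a)%R.
  move=> x z F.
  transitivity (\sum_(b <- itv x z) \sum_(a <- itv x z) (if (b <= a)%O then F b a else 0))%R.
    rewrite [LHS]big_seq [RHS]big_seq; apply: eq_bigr => b; rewrite Hm => /andP[xb _].
    exact: L2.
  rewrite exchange_big /= [LHS]big_seq [RHS]big_seq; apply: eq_bigr => a.
  rewrite Hm => /andP[_ az]; by rewrite (L3 x a z).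
have DL : forall x z u (G : T -> int), u \in itv x z ->
    (\sum_(a <- itv x z) (u == a)%:R * G a)%R = G u.
  move=> x z u G hu; rewrite (bigD1_seq u) //= eqxx mul1r big1 ?addr0 //.
  by move=> a; rewrite eq_sym => /negbTE ->; rewrite mul0r.
have Hmm : forall x y, x <= y -> (\sum_(a <- itv x y) J a y y)%R = ((x == y)%:R)%R.
  move=> x y xy; have := HJ x y y xy (lexx y).
  rewrite /tri /delta3 eqxx andbT => <-; apply: eq_bigr => a _.
  by rewrite L1 /zeta3 mul1r mulr1.
have Hnn : forall y z, y <= z -> (\sum_(b <- itv y z) J y y b)%R = ((y == z)%:R)%R.
  move=> y z yz; have := HJ y y z (lexx y) yz.
  rewrite /tri /delta3 eqxx /= => <-; rewrite L1; apply: eq_bigr => b _.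
  by rewrite /zeta3 mul1r mulr1.
have Key : forall x z, x <= z -> J x x z = J x z z.
  move=> x z xz.
  have xin : x \in itv x z by rewrite Hm lexx xz.
  have zin : z \in itv x z by rewrite Hm lexx xz.
  transitivity (\sum_(b <- itv x z) J x x b * (b == z)%:R)%R.
    rewrite -(DL x z z (fun b => J x x b)) //; apply: eq_bigr => b _.
    by rewrite mulrC eq_sym.
  transitivity (\sum_(a <- itv x z) (x == a)%:R * J a z z)%R; last exact: DL.
  transitivity (\sum_(b <- itv x z) \sum_(a <- itv b z) J x x b * J a z z)%R.
    rewrite big_seq [RHS]big_seq; apply: eq_bigr => b; rewrite Hm => /andP[_ bz].
    by rewrite -mulr_sumr Hmm.
  rewrite EX big_seq [RHS]big_seq; apply: eq_bigr => a; rewrite Hm => /andP[xa _].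
  by rewrite -mulr_suml Hnn.
have G2 : forall x y z : T, x <= y -> y <= z ->
     (\sum_(a <- itv x y) \sum_(b <- itv y z) J x a a * J b b z)%R = delta3 x y z.
  move=> x y z xy yz.
  under eq_bigr => a _ do rewrite -mulr_sumr.
  rewrite -mulr_suml.
  have -> : (\sum_(a <- itv x y) J x a a)%R = ((x == y)%:R)%R.
    rewrite -Hnn // big_seq [RHS]big_seq; apply: eq_bigr => a.
    by rewrite Hm => /andP[xa _]; rewrite Key.
  have -> : (\sum_(b <- itv y z) J b b z)%R = ((y == z)%:R)%R.
    rewrite -Hmm // big_seq [RHS]big_seq; apply: eq_bigr => b.
    by rewrite Hm => /andP[_ bz]; rewrite Key.
  by rewrite /delta3 -natrM mulnb.
split=> // x y z xy yz; rewrite -G2 // /tri /zeta3.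
by apply: eq_bigr => a _; apply: eq_bigr => b _; rewrite mulr1.
Qed.
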